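(* Let $\Theta$ be a well-formed System $\mathsf{F_\wedge}$ context, $S_0,T_0$ types over $\Theta$, and $S_1,T_1$ types over $\Theta, X<:S_0$. If $\Theta \vdash T_0 <: S_0$ and $\Theta, X <: S_0 \vdash S_1 <: T_1$, then $\Theta \vdash \forall X.\,S_1[X\wedge S_0/X] <: \forall X.\,T_1[X\wedge T_0/X^-]$.
   Context: System $\mathsf{F_\wedge}$: raw types $T ::= \top \mid X \mid T \to T \mid \forall X.T \mid T \wedge T$, identified up to $\alpha$-conversion. Contexts are finite sequences of assumptions $X<:T$ or $x:T$ with distinct variables, each type well-formed over the preceding part. Subtyping $\Theta \vdash S <: T$ is generated by: (Var) $\Theta, X<:T,\Theta' \vdash X <: T$; (Top) $T <: \top$; (Refl); (Trans); ($\to$) from $S'<:S$ and $T<:T'$ infer $S\to T <: S' \to T'$; ($\forall$) from $\Theta, X<:\top \vdash S <: T$ infer $\Theta \vdash \forall X.S <: \forall X.T$; (meet) $S\wedge S' <: S$, $S \wedge S' <: S'$, and from $T<:S$, $T<:S'$ infer $T <: S\wedge S'$. $T[U/X]$ is ordinary capture-avoiding substitution. Mixed substitution $T[(S_-,S_+)/X]$: $X \mapsto S_+$; $Y \mapsto Y$ for $Y\not\equiv X$; $\top\mapsto\top$; $(T\to T')[(S_-,S_+)/X] = T[(S_+,S_-)/X] \to T'[(S_-,S_+)/X]$; it commutes with $\forall Y$ and $\wedge$. $T[U/X^-]$ abbreviates $T[(U,X)/X]$ (only negative occurrences of $X$ replaced by $U$). *)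

(* Defs.v *)
From Stdlib Require Import List.
Import ListNotations.

Inductive ty : Type :=
| TTop : ty
| TVar : nat -> ty
| TArr : ty -> ty -> ty
| TAll : ty -> ty          (* forall X. T ; X is index 0 in the body *)
| TMeet : ty -> ty -> ty.

Definition uprn (xi : nat -> nat) : nat -> nat :=
  fun n => match n with 0 => 0 | S m => S (xi m) end.

Fixpoint rename (xi : nat -> nat) (T : ty) : ty :=
  match T with
  | TTop => TTop
  | TVar n => TVar (xi n)
  | TArr A B => TArr (rename xi A) (rename xi B)
  | TAll A => TAll (rename (uprn xi) A)
  | TMeet A B => TMeet (rename xi A) (rename xi B)
  end.

Definition shift (T : ty) : ty := rename S T.

Definition up (sigma : nat -> ty) : nat -> ty :=
  fun n => match n with 0 => TVar 0 | S m => shift (sigma m) end.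

Fixpoint subst (sigma : nat -> ty) (T : ty) : ty :=
  match T with
  | TTop => TTop
  | TVar n => sigma n
  | TArr A B => TArr (subst sigma A) (subst sigma B)
  | TAll A => TAll (subst (up sigma) A)
  | TMeet A B => TMeet (subst sigma A) (subst sigma B)
  end.

(* Mixed substitution: sneg is used for variables in negative position,
   spos for variables in positive position; the arrow domain swaps them. *)
Fixpoint msubst (sneg spos : nat -> ty) (T : ty) : ty :=
  match T with
  | TTop => TTop
  | TVar n => spos n
  | TArr A B => TArr (msubst spos sneg A) (msubst sneg spos B)
  | TAll A => TAll (msubst (up sneg) (up spos) A)
  | TMeet A B => TMeet (msubst sneg spos A) (msubst sneg spos B)
  end.

(* substitution for the variable X = index 0, leaving other variables alone
   (X stays in scope: used when X is subsequently rebound by a forall) *)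
Definition at0 (U : ty) : nat -> ty :=
  fun n => match n with 0 => U | S m => TVar (S m) end.

Definition subst0 (U T : ty) : ty := subst (at0 U) T.
(* T[(Sm,Sp)/X] with X = index 0 *)
Definition msubst0 (Sm Sp T : ty) : ty := msubst (at0 Sm) (at0 Sp) T.
(* T[U/X^-] := T[(U,X)/X] *)
Definition nsubst0 (U T : ty) : ty := msubst0 U (TVar 0) T.

(* Contexts: most recent binding first. *)
Inductive entry : Type :=
| TBind : ty -> entry
| VBind : ty -> entry.

Definition ctx := list entry.

Fixpoint ntv (G : ctx) : nat :=
  match G with
  | [] => 0
  | TBind _ :: G' => S (ntv G')
  | VBind _ :: G' => ntv G'
  end.

Fixpoint wf_ty (k : nat) (T : ty) : Prop :=
  match T with
  | TTop => True
  | TVar n => n < k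
  | TArr A B => wf_ty k A /\ wf_ty k B
  | TAll A => wf_ty (S k) A
  | TMeet A B => wf_ty k A /\ wf_ty k B
  end.

Inductive wf_ctx : ctx -> Prop :=
| wf_nil : wf_ctx []
| wf_tbind : forall G T, wf_ctx G -> wf_ty (ntv G) T -> wf_ctx (TBind T :: G)
| wf_vbind : forall G T, wf_ctx G -> wf_ty (ntv G) T -> wf_ctx (VBind T :: G).

(* bound of type variable n in G, expressed over the whole of G *)
Fixpoint tlookup (G : ctx) (n : nat) : option ty :=
  match G with
  | [] => None
  | TBind T :: G' =>
      match n with
      | 0 => Some (shift T)
      | S m => option_map shift (tlookup G' m)
      end
  | VBind _ :: G' => tlookup G' n
  end.

Inductive sub : ctx -> ty -> ty -> Prop :=
| SVar : forall G n T, tlookup G n = Some T -> sub G (TVar n) T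
| STop : forall G T, sub G T TTop
| SRefl : forall G T, sub G T T
| STrans : forall G S U T, sub G S U -> sub G U T -> sub G S T
| SArr : forall G S S' T T', sub G S' S -> sub G T T' -> sub G (TArr S T) (TArr S' T')
| SAll : forall G S T, sub (TBind TTop :: G) S T -> sub G (TAll S) (TAll T)
| SMeetL : forall G S S', sub G (TMeet S S') S
| SMeetR : forall G S S', sub G (TMeet S S') S'
| SMeetI : forall G T S S', sub G T S -> sub G T S' -> sub G T (TMeet S S').

(* Main.v *)
Require Import Defs.
From Stdlib Require Import List Lia.
Import ListNotations.

Lemma rename_ext : forall T f g, (forall n, f n = g n) -> rename f T = rename g T.
Proof.
  induction T; intros f g H; simpl; try rewrite (IHT1 f g H), (IHT2 f g H); auto.
  - f_equal; apply IHT; intros [|n]; simpl; auto.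
Qed.

Lemma rename_rename : forall T f g, rename f (rename g T) = rename (fun n => f (g n)) T.
Proof.
  induction T; intros f g; simpl; try rewrite IHT1, IHT2; auto.
  f_equal; rewrite IHT; apply rename_ext; intros [|n]; simpl; auto.
Qed.

Lemma subst_ext : forall T f g, (forall n, f n = g n) -> subst f T = subst g T.
Proof.
  induction T; intros f g H; simpl; try rewrite (IHT1 f g H), (IHT2 f g H); auto.
  f_equal; apply IHT; intros [|n]; simpl; auto. rewrite H; auto.
Qed.

Lemma subst_rename : forall T s xi, subst s (rename xi T) = subst (fun n => s (xi n)) T.
Proof.
  induction T; intros s xi; simpl; try rewrite IHT1, IHT2; auto.
  f_equal; rewrite IHT; apply subst_ext; intros [|n]; simpl; auto.
Qed.

Lemma rename_subst : forall T s xi, rename xi (subst s T) = subst (fun n => rename xi (s n)) T.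
Proof.
  induction T; intros s xi; simpl; try rewrite IHT1, IHT2; auto.
  f_equal; rewrite IHT; apply subst_ext; intros [|n]; simpl; auto.
  unfold shift; rewrite !rename_rename; apply rename_ext; auto.
Qed.

Lemma rename_as_subst : forall T xi, rename xi T = subst (fun n => TVar (xi n)) T.
Proof.
  induction T; intros xi; simpl; try rewrite IHT1, IHT2; auto.
  f_equal; rewrite IHT; apply subst_ext; intros [|n]; simpl; auto.
Qed.

Lemma subst_up_shift : forall T s, subst (up s) (shift T) = shift (subst s T).
Proof.
  intros; unfold shift at 1; rewrite subst_rename; unfold shift; rewrite rename_subst.
  apply subst_ext; intros; simpl; auto.
Qed.

Lemma subst_msubst : forall T s, subst s T = msubst s s T.
Proof.
  induction T; intros s; simpl; try rewrite <- IHT1, <- IHT2; auto.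
  rewrite IHT; auto.
Qed.

Lemma sub_rename : forall G A B, sub G A B -> forall D xi,
  (forall n T, tlookup G n = Some T -> tlookup D (xi n) = Some (rename xi T)) ->
  sub D (rename xi A) (rename xi B).
Proof.
  induction 1; intros D xi H'; simpl.
  - apply SVar; auto.
  - apply STop.
  - apply SRefl.
  - eapply STrans; eauto.
  - apply SArr; auto.
  - apply SAll. apply IHsub. intros [|m] T0 HT; simpl in *.
    + inversion HT; subst; reflexivity.
    + destruct (tlookup G m) eqn:E; simpl in HT; inversion HT; subst.
      rewrite (H' _ _ E); simpl. f_equal. unfold shift; rewrite !rename_rename.
      apply rename_ext; auto.
  - apply SMeetL.
  - apply SMeetR.
  - apply SMeetI; auto.
Qed.

Lemma weaken : forall G A B, sub G A B -> sub (TBind TTop :: G) (shift A) (shift B).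
Proof.
  intros; eapply sub_rename; eauto. intros n T HT; simpl; rewrite HT; reflexivity.
Qed.

Lemma sub_subst : forall G A B, sub G A B -> forall D s,
  (forall n T, tlookup G n = Some T -> sub D (s n) (subst s T)) ->
  sub D (subst s A) (subst s B).
Proof.
  induction 1; intros D s H'; simpl.
  - auto.
  - apply STop.
  - apply SRefl.
  - eapply STrans; eauto.
  - apply SArr; auto.
  - apply SAll. apply IHsub. intros [|m] T0 HT; simpl in *.
    + inversion HT; subst. apply STop.
    + destruct (tlookup G m) eqn:E; simpl in HT; inversion HT; subst.
      rewrite subst_up_shift. apply weaken; auto.
  - apply SMeetL.
  - apply SMeetR.
  - apply SMeetI; auto.
Qed.

Lemma sub_msubst : forall T G n1 p1 n2 p2,
  (forall n, sub G (n2 n) (n1 n)) -> (forall n, sub G (p1 n) (p2 n)) ->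
  sub G (msubst n1 p1 T) (msubst n2 p2 T).
Proof.
  induction T; intros G n1 p1 n2 p2 Hn Hp; simpl.
  - apply SRefl.
  - auto.
  - apply SArr; auto.
  - apply SAll. apply IHT; intros [|m]; simpl; try apply SRefl; apply weaken; auto.
  - apply SMeetI; [eapply STrans; [apply SMeetL|] | eapply STrans; [apply SMeetR|]]; auto.
Qed.

Lemma subst_at0_shift : forall U T, subst (at0 U) (shift T) = shift T.
Proof.
  intros; unfold shift; rewrite subst_rename, rename_as_subst; apply subst_ext; auto.
Qed.

Theorem lemma3p8 (G : ctx) (S0 T0 S1 T1 : ty) :
  wf_ctx G ->
  wf_ty (ntv G) S0 -> wf_ty (ntv G) T0 ->
  wf_ty (S (ntv G)) S1 -> wf_ty (S (ntv G)) T1 ->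
  sub G T0 S0 ->
  sub (cons (TBind S0) G) S1 T1 ->
  sub G (TAll (subst0 (TMeet (TVar 0) (shift S0)) S1))
        (TAll (nsubst0 (TMeet (TVar 0) (shift T0)) T1)).
Proof.
  intros _ _ _ _ _ H0 H1. apply SAll.
  apply STrans with (subst0 (TMeet (TVar 0) (shift S0)) T1).
  - unfold subst0. eapply sub_subst; [exact H1|].
    intros [|m] T HT; simpl in HT.
    + inversion HT; subst. rewrite subst_at0_shift. simpl. apply SMeetR.
    + destruct (tlookup G m) eqn:E; simpl in HT; inversion HT; subst.
      rewrite subst_at0_shift. simpl. apply SVar. simpl. rewrite E. reflexivity.
  - unfold subst0, nsubst0, msubst0. rewrite subst_msubst. apply sub_msubst.
    + intros [|m]; simpl; [|apply SRefl].
      apply SMeetI; [apply SMeetL|]. eapply STrans; [apply SMeetR|]. apply weaken; auto.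
    + intros [|m]; simpl; [apply SMeetL|apply SRefl].
Qed.
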